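(* Let $G=(V,E,C,\ell)$ be an edge-labeled hypergraph with exactly two categories $C=\{c_1,c_2\}$. Construct a directed graph $G'=(V',E')$ with unit arc capacities as follows. $V'$ consists of $V$, two terminal nodes $s$ and $t$, and one new auxiliary node $u_e$ for each hyperedge $e\in E$. For each hyperedge $e=\{v_1,\dots,v_r\}\in E$: if $\ell(e)=c_1$, add the arcs $(s,u_e),(u_e,v_1),\dots,(u_e,v_r)$; if $\ell(e)=c_2$, add the arcs $(u_e,t),(v_1,u_e),\dots,(v_r,u_e)$. Let $S^*\subseteq V'$ with $s\in S^*$, $t\notin S^*$ be a minimum $s$-$t$ cut, i.e. a set minimizing the number of arcs $(a,b)\in E'$ with $a\in S^*$, $b\notin S^*$ among all subsets of $V'$ containing $s$ and not $t$. Define $Y:V\to C$ by $Y[i]=c_1$ if $i\in S^*$ and $Y[i]=c_2$ if $i\notin S^*$. Then $Y$ minimizes $\mathrm{CatEdgeClus}$ over all clusterings $V\to C$.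
   Context: An edge-labeled hypergraph $G=(V,E,C,\ell)$ consists of a finite node set $V$, a finite collection $E$ of hyperedges (nonempty subsets of $V$), a finite set $C$ of categories, and a labeling $\ell:E\to C$. A clustering is a map $Y:V\to C$. For $e\in E$, $m_Y(e)=1$ if $Y[i]\neq\ell(e)$ for some $i\in e$, and $m_Y(e)=0$ otherwise. The Categorical Edge Clustering objective is $\mathrm{CatEdgeClus}(Y)=\sum_{e\in E}m_Y(e)$. *)

(* Defs.v *)
From mathcomp Require Import all_boot.
Set Implicit Arguments. Unset Strict Implicit. Unset Printing Implicit Defensive.

(* An edge-labeled hypergraph: nodes V (finType), hyperedges indexed by a
   finType I (so E may contain repeated hyperedges), edge e : {set V},
   categories C (finType), labeling lab : I -> C. *)

Section Hypergraph.
Variables (V I C : finType) (edge : I -> {set V}) (lab : I -> C).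

Definition mistake (Y : V -> C) (e : I) : nat :=
  [exists i in edge e, Y i != lab e].

Definition CatEdgeClus (Y : V -> C) : nat := \sum_(e : I) mistake Y e.

(* Node set of the auxiliary directed graph G':
   inl (inl v) = original node v, inl (inr e) = auxiliary node u_e,
   inr true = terminal s, inr false = terminal t. *)
Definition node : finType := ((V + I) + bool)%type.
Definition vnode (v : V) : node := inl (inl v).
Definition anode (e : I) : node := inl (inr e).
Definition src : node := inr true.
Definition snk : node := inr false.

Variables (c1 c2 : C).

Definition arc (a b : node) : bool :=
  match a, b with
  | inr true, inl (inr e) => lab e == c1                        (* (s, u_e) *)
  | inl (inr e), inl (inl v) => (lab e == c1) && (v \in edge e) (* (u_e, v) *)
  | inl (inr e), inr false => lab e == c2                       (* (u_e, t) *)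
  | inl (inl v), inl (inr e) => (lab e == c2) && (v \in edge e) (* (v, u_e) *)
  | _, _ => false
  end.

Definition cut_value (S : {set node}) : nat :=
  #|[set p : node * node | arc p.1 p.2 && (p.1 \in S) && (p.2 \notin S)]|.

Definition is_min_st_cut (S : {set node}) : Prop :=
  [/\ src \in S, snk \notin S &
      forall S' : {set node}, src \in S' -> snk \notin S' ->
        cut_value S <= cut_value S'].

Definition cut_clustering (S : {set node}) (v : V) : C :=
  if vnode v \in S then c1 else c2.

End Hypergraph.

(* Main.v *)
Require Import Defs.
From mathcomp Require Import all_boot.
Set Implicit Arguments. Unset Strict Implicit. Unset Printing Implicit Defensive.

Lemma big_opt (I : finType) (F : option I -> nat) :
  \sum_(o : option I) F o = F None + \sum_(e : I) F (Some e).
Proof.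
have -> : index_enum (option I) = None :: map Some (index_enum I).
  by rewrite /index_enum [in LHS]unlock /= [in LHS]Finite.enum.unlock /= /option_enum.
rewrite (big_cons 0 addn None (map Some (index_enum I)) xpredT F).
by rewrite big_map.
Qed.

Lemma card_part (T I : finType) (A : {set T}) (g : T -> option I) :
  #|A| = #|[set p in A | g p == None]| + \sum_e #|[set p in A | g p == Some e]|.
Proof.
rewrite -sum1_card (partition_big g xpredT) //= big_opt.
congr (_ + _); last apply: eq_bigr => e _; rewrite -sum1_card; apply: eq_bigl => p;
  by rewrite !inE.
Qed.

Definition gidx (V I : finType) (p : node V I * node V I) : option I :=
  match p with
  | (inl (inr e), _) => Some e
  | (_, inl (inr e)) => Some e
  | _ => None
  end.

Definition cutset (V I C : finType) (edge : I -> {set V}) (lab : I -> C) (c1 c2 : C)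
  (S : {set node V I}) :=
  [set p : node V I * node V I | Defs.arc edge lab c1 c2 p.1 p.2 && (p.1 \in S) && (p.2 \notin S)].

Lemma cut_split (V I C : finType) (edge : I -> {set V}) (lab : I -> C) (c1 c2 : C)
  (S : {set node V I}) :
  cut_value edge lab c1 c2 S =
  \sum_e #|[set p in cutset edge lab c1 c2 S | gidx p == Some e]|.
Proof.
rewrite /cut_value -/(cutset edge lab c1 c2 S) (card_part _ (@gidx V I)).
suff -> : [set p in cutset edge lab c1 c2 S | gidx p == None] = set0 by rewrite cards0.
apply/setP => -[[[v|f]|[]] [[w|f']|[]]]; by rewrite !inE /= ?andbF.
Qed.
Lemma edgeA (V I C : finType) (edge : I -> {set V}) (lab : I -> C) (c1 c2 : C)
  (c12 : c1 != c2) (C2 : forall c : C, c = c1 \/ c = c2)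
  (S : {set node V I}) (Hsrc : src V I \in S) (Hsnk : snk V I \notin S) (e : I) :
  mistake edge lab (cut_clustering c1 c2 S) e <=
  #|[set p in cutset edge lab c1 c2 S | gidx p == Some e]|.
Proof.
rewrite /mistake; case: existsP => [[v /andP[ve hv]]|_] //=.
rewrite card_gt0; apply/set0Pn.
move: hv; rewrite /cut_clustering.
have c21 : (c2 == c1) = false by apply/negbTE; rewrite eq_sym.
case: (C2 (lab e)) => le; rewrite le.
- case: ifP => [_|hvS _]; first by rewrite eqxx.
  case hS: (anode V e \in S).
  + by exists (anode V e, vnode I v); rewrite !inE /= le ?eqxx ?ve ?hS ?hvS ?Hsrc ?Hsnk /= ?eqxx ?andbT.
  + by exists (src V I, anode V e); rewrite !inE /= le ?eqxx ?ve ?hS ?hvS ?Hsrc ?Hsnk /= ?eqxx ?andbT.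
- case: ifP => [hvS _|_]; last by rewrite eqxx.
  case hS: (anode V e \in S).
  + by exists (anode V e, snk V I); rewrite !inE /= le ?eqxx ?ve ?hS ?hvS ?Hsrc ?Hsnk /= ?eqxx ?andbT.
  + by exists (vnode I v, anode V e); rewrite !inE /= le ?eqxx ?ve ?hS ?hvS ?Hsrc ?Hsnk /= ?eqxx ?andbT.
Qed.
Definition SY (V I C : finType) (edge : I -> {set V}) (lab : I -> C) (c1 : C)
  (Y : V -> C) : {set node V I} :=
  [set x : node V I | match x with
    | inl (inl v) => Y v == c1
    | inl (inr e) => if lab e == c1 then [forall v in edge e, Y v == c1]
                     else [exists v in edge e, Y v == c1]
    | inr b => b end].

Ltac crush le := rewrite !inE /= ?andbF //;
  repeat match goal with |- context [Some ?f == Some ?g] =>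
     rewrite -[Some f == Some g]/(f == g);
     case: (f =P g) => [->|_]; rewrite ?eqxx ?andbF ?andbT // end;
  rewrite ?le ?eqxx /= ?andbF ?andbT //.

Lemma edgeC (V I C : finType) (edge : I -> {set V}) (lab : I -> C) (c1 c2 : C)
  (c12 : c1 != c2) (C2 : forall c : C, c = c1 \/ c = c2)
  (Y : V -> C) (e : I) :
  #|[set p in cutset edge lab c1 c2 (SY edge lab c1 Y) | gidx p == Some e]|
  <= mistake edge lab Y e.
Proof.
have c21 : (c2 == c1) = false by apply/negbTE; rewrite eq_sym.
have c12' : (c1 == c2) = false by apply/negbTE.
rewrite /mistake.
case: (C2 (lab e)) => le; rewrite le.
{ case hall: [forall v in edge e, Y v == c1].
  { have -> : [exists i in edge e, Y i != c1] = false.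
      apply/negbTE/negP => /existsP[v /andP[ve]].
      by move/forallP: hall => /(_ v); rewrite ve /= => ->.
    rewrite leqn0 cards_eq0; apply/eqP/setP => -[[[v|f]|[]] [[w|f']|[]]]; crush le.
    all: rewrite ?c12' ?c21 ?hall ?andbF //. 
    all: case we: (w \in edge e) => //=.
    all: by move/forallP: hall => /(_ w); rewrite we /= => ->. }
  { have -> : [exists i in edge e, Y i != c1] = true.
      apply/existsP; move/negbT: hall => /forallPn[v]; rewrite negb_imply.
      by move=> h; exists v.
    apply: leq_trans (subset_leq_card (_ : _ \subset [set (src V I, anode V e)])) _;
      last by rewrite cards1.
    apply/subsetP => -[[[v|f]|[]] [[w|f']|[]]]; crush le.
    all: rewrite ?c12' ?c21 ?hall ?andbF //. 
    } }
{ case hex: [exists v in edge e, Y v == c1].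
  { have -> : [exists i in edge e, Y i != c2] = true.
      apply/existsP; case/existsP: hex => v /andP[ve /eqP hv]; exists v.
      by rewrite ve hv c12'.
    apply: leq_trans (subset_leq_card (_ : _ \subset [set (anode V e, snk V I)])) _;
      last by rewrite cards1.
    apply/subsetP => -[[[v|f]|[]] [[w|f']|[]]]; crush le.
    all: rewrite ?c12' ?c21 ?hex ?andbF //. 
    }
  { have -> : [exists i in edge e, Y i != c2] = false.
      apply/negbTE/negP => /existsP[v /andP[ve hv]]; move/negbT: hex => /existsPn/(_ v).
      by rewrite ve /=; case: (C2 (Y v)) hv => ->; rewrite ?eqxx.
    rewrite leqn0 cards_eq0; apply/eqP/setP => -[[[v|f]|[]] [[w|f']|[]]]; crush le.
    all: rewrite ?c12' ?c21 ?hex ?andbF //. 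
    all: case ve: (v \in edge e) => /=; rewrite ?andbT; apply/negbTE; move/negbT: hex => /existsPn/(_ v); by rewrite ve.
    } }
Qed.

Theorem mainTheorem2 (V I C : finType) (edge : I -> {set V}) (lab : I -> C)
    (c1 c2 : C)
    (edge_nonempty : forall e : I, edge e != set0)
    (c12 : c1 != c2) (C2 : forall c : C, c = c1 \/ c = c2)
    (Sstar : {set node V I})
    (Hmin : is_min_st_cut edge lab c1 c2 Sstar) :
  forall Y : V -> C,
    CatEdgeClus edge lab (cut_clustering c1 c2 Sstar) <=
    CatEdgeClus edge lab Y.
Proof.
move=> Y; case: Hmin => Hs Ht Hm.
apply: (@leq_trans (cut_value edge lab c1 c2 Sstar)).
  rewrite cut_split /CatEdgeClus; apply: leq_sum => e _; exact: edgeA.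
apply: leq_trans (Hm (SY edge lab c1 Y) _ _) _; rewrite ?inE //.
rewrite cut_split /CatEdgeClus; apply: leq_sum => e _; exact: edgeC.
Qed.
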